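(* Let $V$ be a partially expanded network (as defined in the context) satisfying Properties P1, P2 and P3, with consumption values $q_v$, $v\in V$, given by P3. Suppose the discretized TDASP has a feasible solution. Then the TDASP restricted to $V$ has a feasible solution, and its optimal value (minimum of $\theta_n(t_n)$) is less than or equal to the optimal value of the discretized TDASP.
   Context: Data: activities $1,\dots,n$ with time windows $[e_i,l_i]$, functions $\tau_i$, $\rho_i$, $\theta_i(t)=t+\tau_i(t)$, and a capacity $Q$. Every $\theta_i$ is non-decreasing (FIFO property). Let $\varepsilon>0$ be such that all $e_i,l_i$ are integer multiples of $\varepsilon$, and let $T_i=\{e_i,e_i+\varepsilon,\dots,l_i\}$. The discretized TDASP (fully expanded network) is: choose $t_i\in T_i$ ($1\le i\le n$) minimising $\theta_n(t_n)$ subject to $\theta_i(t_i)\le t_{i+1}$ for $1\le i<n$ and $\sum_{i=1}^n\rho_i(t_i)\le Q$. A partially expanded network is a set $V\subseteq\{(i,t):1\le i\le n,\ t\in T_i\}$. It satisfies Property P1 if $(i,e_i)\in V$ and $(i,l_i)\in V$ for every $i$; Property P2 if for every $(i,t)\in V$ with $i<n$ and $e_{i+1}<\varepsilon\lceil\theta_i(t)/\varepsilon\rceil<l_{i+1}$ we have $(i+1,\varepsilon\lceil\theta_i(t)/\varepsilon\rceil)\in V$; Property P3 if every $(i,t)\in V$ with $t<l_i$ is assigned the value $q_{(i,t)}=\min_{\bar t\in\{t,t+\varepsilon,\dots,t'-\varepsilon\}}\rho_i(\bar t)$ where $t'>t$ is the smallest value with $(i,t')\in V$, and every $(i,l_i)\in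 V$ is assigned $q_{(i,l_i)}=\rho_i(l_i)$. The TDASP restricted to $V$ is: choose $(1,t_1),\dots,(n,t_n)\in V$ minimising $\theta_n(t_n)$ subject to $\theta_i(t_i)\le t_{i+1}$ for $1\le i<n$ and $\sum_{i=1}^n q_{(i,t_i)}\le Q$. *)

(* Defs.v *)
From HB Require Import structures.
From mathcomp Require Import all_boot all_order all_algebra.
From mathcomp Require Import reals.
Set Implicit Arguments. Unset Strict Implicit. Unset Printing Implicit Defensive.
Import Order.TTheory GRing.Theory Num.Theory.
Local Open Scope ring_scope.

Section TDASP.
Variable R : realType.

Definition theta (tau : nat -> R -> R) (i : nat) (t : R) : R := t + tau i t.

Definition grid (e l : nat -> R) (eps : R) (i : nat) (t : R) : Prop :=
  exists k : nat, t = e i + k%:R * eps /\ t <= l i.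

Definition ceil_eps (eps x : R) : R := eps * (Num.ceil (x / eps))%:~R.

Definition feasible_full (n : nat) (e l : nat -> R) (eps : R)
    (tau rho : nat -> R -> R) (Q : R) (t : nat -> R) : Prop :=
  (forall i, (1 <= i <= n)%N -> grid e l eps i (t i)) /\
  (forall i, (1 <= i < n)%N -> theta tau i (t i) <= t i.+1) /\
  \sum_(1 <= i < n.+1) rho i (t i) <= Q.

Definition feasible_restricted (n : nat) (V : nat -> R -> Prop)
    (tau q : nat -> R -> R) (Q : R) (t : nat -> R) : Prop :=
  (forall i, (1 <= i <= n)%N -> V i (t i)) /\
  (forall i, (1 <= i < n)%N -> theta tau i (t i) <= t i.+1) /\
  \sum_(1 <= i < n.+1) q i (t i) <= Q.

Definition optimal_value (n : nat) (tau : nat -> R -> R)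
    (feas : (nat -> R) -> Prop) (v : R) : Prop :=
  (exists t, feas t /\ v = theta tau n (t n)) /\
  (forall t, feas t -> v <= theta tau n (t n)).

Definition is_min_on (S : R -> Prop) (f : R -> R) (m : R) : Prop :=
  (exists x, S x /\ m = f x) /\ (forall x, S x -> m <= f x).

Definition partially_expanded (n : nat) (e l : nat -> R) (eps : R)
    (V : nat -> R -> Prop) : Prop :=
  forall i t, V i t -> (1 <= i <= n)%N /\ grid e l eps i t.

Definition P1 (n : nat) (e l : nat -> R) (V : nat -> R -> Prop) : Prop :=
  forall i, (1 <= i <= n)%N -> V i (e i) /\ V i (l i).

Definition P2 (n : nat) (e l : nat -> R) (eps : R) (tau : nat -> R -> R)
    (V : nat -> R -> Prop) : Prop :=
  forall i t, V i t -> (i < n)%N ->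
    e i.+1 < ceil_eps eps (theta tau i t) < l i.+1 ->
    V i.+1 (ceil_eps eps (theta tau i t)).

(* q_(i,t) = min of rho_i over {t, t+eps, ..., t'-eps}, t' the next node of V
   after t in row i; and q_(i,l_i) = rho_i(l_i). *)
Definition P3 (l : nat -> R) (eps : R) (rho : nat -> R -> R)
    (V : nat -> R -> Prop) (q : nat -> R -> R) : Prop :=
  (forall i t, V i t -> t < l i ->
     forall t', V i t' -> t < t' -> (forall s, V i s -> t < s -> t' <= s) ->
     is_min_on (fun tb => exists k : nat, tb = t + k%:R * eps /\ tb <= t' - eps)
               (rho i) (q i t)) /\
  (forall i, V i (l i) -> q i (l i) = rho i (l i)).

End TDASP.

(* Main.v *)
Require Import Defs.
From HB Require Import structures.
From mathcomp Require Import all_boot all_order all_algebra.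
From mathcomp Require Import reals.
From mathcomp Require Import ring lra.
From Stdlib Require Import Classical ClassicalEpsilon.
Import Order.TTheory GRing.Theory Num.Theory.
Local Open Scope ring_scope.

Lemma nat_max (P : nat -> Prop) N :
  (exists m, P m) -> (forall k, P k -> (k <= N)%N) ->
  exists k, P k /\ forall j, P j -> (j <= k)%N.
Proof.
elim: N => [|N IH] [m Pm] HB.
  exists 0%N; have := HB _ Pm; rewrite leqn0 => /eqP m0; subst m.
  by split => // j /HB.
case: (classic (P N.+1)) => HN.
  by exists N.+1; split.
apply: IH; first by exists m.
move=> k Pk; have := HB _ Pk; rewrite leq_eqVlt => /orP [/eqP kN|].
  by subst k.
by rewrite ltnS.
Qed.

Lemma nat_min (P : nat -> Prop) m : P m ->
  exists k, P k /\ forall j, P j -> (k <= j)%N.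
Proof.
elim/ltn_ind: m => m IH Pm.
case: (classic (exists j, (j < m)%N /\ P j)) => [[j [jm Pj]]|H].
  exact: IH jm Pj.
exists m; split => // j Pj; case: (leqP m j) => // jm.
by exfalso; apply: H; exists j.
Qed.

Section Proofs.
Variable R : realType.

Lemma gle (x eps : R) (a b : nat) : 0 < eps ->
  (x + a%:R * eps <= x + b%:R * eps) = (a <= b)%N.
Proof. by move=> he; rewrite lerD2l ler_pM2r // ler_nat. Qed.

Lemma glt (x eps : R) (a b : nat) : 0 < eps ->
  (x + a%:R * eps < x + b%:R * eps) = (a < b)%N.
Proof. by move=> he; rewrite ltrD2l ltr_pM2r // ltr_nat. Qed.

Lemma grid_bound (x t eps : R) : 0 < eps ->
  exists N, forall k : nat, x + k%:R * eps <= t -> (k <= N)%N.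
Proof.
move=> he; exists (Num.Def.archi_bound (Num.max 0 ((t - x) / eps))).
move=> k hk.
have h0 : 0 <= Num.max 0 ((t - x) / eps) by rewrite le_max lexx.
have hb := archi_boundP h0.
have hk2 : k%:R <= Num.max 0 ((t - x) / eps).
  rewrite le_max; apply/orP; right; rewrite ler_pdivlMr //; lra.
by have := le_lt_trans hk2 hb; rewrite ltr_nat => /ltnW.
Qed.

Lemma opt_exists n (e : nat -> R) eps tau (F : (nat -> R) -> Prop) :
  0 < eps ->
  (forall x y, x <= y -> theta tau n x <= theta tau n y) ->
  (forall t, F t -> exists k : nat, t n = e n + k%:R * eps) ->
  (exists t, F t) ->
  exists v, optimal_value n tau F v.
Proof.
move=> he mono hg [t0 Ft0].
have [k0 Hk0] := hg _ Ft0.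
have [k [[t [Ft tn]] kmin]] :=
  nat_min (fun k => exists t, F t /\ t n = e n + k%:R * eps) k0
     (ex_intro _ t0 (conj Ft0 Hk0)).
exists (theta tau n (t n)); split; first by exists t.
move=> t' Ft'; apply: mono; have [k' hk'] := hg _ Ft'.
by rewrite tn hk' gle //; apply: kmin; exists t'.
Qed.

End Proofs.

Theorem lemma3 (R : realType) (n : nat) (e l : nat -> R) (eps : R)
    (tau rho : nat -> R -> R) (Q : R) (V : nat -> R -> Prop) (q : nat -> R -> R) :
  (0 < n)%N ->
  0 < eps ->
  (forall i, (1 <= i <= n)%N ->
     (exists z : int, e i = z%:~R * eps) /\ (exists z : int, l i = z%:~R * eps)) ->
  (forall i, (1 <= i <= n)%N -> forall x y : R, x <= y -> theta tau i x <= theta tau i y) ->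
  partially_expanded n e l eps V ->
  P1 n e l V ->
  P2 n e l eps tau V ->
  P3 l eps rho V q ->
  (exists t, feasible_full n e l eps tau rho Q t) ->
  exists vV vD : R,
    optimal_value n tau (feasible_restricted n V tau q Q) vV /\
    optimal_value n tau (feasible_full n e l eps tau rho Q) vD /\
    vV <= vD.
Proof.
move=> n0 he hint mono PE p1 p2 p3 [tf Ftf].
have hn : (1 <= n <= n)%N by rewrite n0 leqnn.
have monon := mono n hn.
have gD : forall t, feasible_full n e l eps tau rho Q t ->
    exists k : nat, t n = e n + k%:R * eps.
  by move=> t [g _]; have [k [hk _]] := g n hn; exists k.
have [vD [[ts [Fts hvD]] optD]] := @opt_exists R n e eps tau _ he monon gD (ex_intro _ tf Ftf).
have [g [prec sum]] := Fts.
have hs : forall i, exists s : R, (1 <= i <= n)%N ->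
    V i s /\ s <= ts i /\ forall s', V i s' -> s' <= ts i -> s' <= s.
  move=> i; case hi: (1 <= i <= n)%N; last by exists 0.
  have [kt [hkt hkl]] := g i hi.
  have [N hN] := @grid_bound R (e i) (ts i) eps he.
  have [|k [[Vk kle] kmax]] :=
    nat_max (fun k => V i (e i + k%:R*eps) /\ e i + k%:R*eps <= ts i) N _
      (fun k hk => hN k hk.2).
    exists 0%N; rewrite mul0r addr0; split; first exact: (p1 i hi).1.
    by rewrite hkt lerDl mulr_ge0 // ltW.
  exists (e i + k%:R*eps) => _; split => //; split => // s' Vs' s'le.
  have [_ [k' [hk' _]]] := PE _ _ Vs'.
  by rewrite hk' gle //; apply: kmax; rewrite -hk'.
pose s := fun i => proj1_sig (constructive_indefinite_description _ (hs i)).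
have sP : forall i, (1 <= i <= n)%N ->
    V i (s i) /\ s i <= ts i /\ forall s', V i s' -> s' <= ts i -> s' <= s i.
  by move=> i; exact: (proj2_sig (constructive_indefinite_description _ (hs i))).
clearbody s.
have qb : forall i, (1 <= i <= n)%N -> q i (s i) <= rho i (ts i).
  move=> i hi; have [Vs [sle smax]] := sP i hi.
  have [_ [a [ha sl]]] := PE _ _ Vs.
  have [b [hb tl]] := g i hi.
  case: (ltrP (s i) (l i)) => sl2; last first.
    have sll : s i = l i by apply/eqP; rewrite eq_le sl sl2.
    have tll : ts i = l i.
      by apply/eqP; rewrite eq_le tl (le_trans sl2 sle).
    rewrite sll tll; have [_ p32] := p3; by rewrite p32 // -sll.
  have Vl := (p1 i hi).2.
  have [_ [c [hc _]]] := PE _ _ Vl.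
  have [|k0 [[Vk0 lt0] k0min]] :=
    nat_min (fun k => V i (e i + k%:R*eps) /\ s i < e i + k%:R*eps) c _.
    by rewrite -hc.
  have hmin := (proj1 p3) i (s i) Vs sl2 (e i + k0%:R*eps) Vk0 lt0.
  have [|_ hm] := hmin.
    move=> s'' Vs'' lt''; have [_ [k'' [hk'' _]]] := PE _ _ Vs''.
    by rewrite hk'' gle //; apply: k0min; rewrite -hk''.
  apply: hm.
  have ab : (a <= b)%N by rewrite -(@gle R (e i) eps _ _ he) -ha -hb.
  have bk : (b < k0)%N.
    rewrite -(@glt R (e i) eps _ _ he) -hb ltNge; apply/negP => h.
    by have := lt_le_trans lt0 (smax _ Vk0 h); rewrite ltxx.
  exists (b - a)%N; split.
    by rewrite hb ha natrB //; ring.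
  have h1 : (b%:R + 1 <= k0%:R :> R).
    by rewrite -[1]/(1%:R) -natrD ler_nat addn1.
  have h2 : 0 <= (k0%:R - (b%:R + 1)) * eps.
    by apply: mulr_ge0; [rewrite subr_ge0 | exact: ltW].
  move: h2; rewrite mulrBl mulrDl mul1r => h2.
  rewrite hb; lra.
have pr : forall i, (1 <= i < n)%N -> theta tau i (s i) <= s i.+1.
  move=> i /andP[i1 iltn].
  have hi : (1 <= i <= n)%N by rewrite i1 ltnW.
  have hi1 : (1 <= i.+1 <= n)%N by apply/andP; split.
  have [Vs [sle smax]] := sP i hi.
  have [Vs1 [sle1 smax1]] := sP i.+1 hi1.
  set x := theta tau i (s i).
  have xt : x <= ts i.+1.
    by apply: le_trans (mono i hi _ _ sle) (prec i _); rewrite i1 iltn.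
  have [[z hz] _] := hint i.+1 hi1.
  have [b [hb tl]] := g i.+1 hi1.
  have tsz : ts i.+1 = (z + b%:Z)%:~R * eps by rewrite hb hz intrD mulrDl.
  have xc : x <= ceil_eps eps x.
    by rewrite /ceil_eps mulrC -ler_pdivrMr //; exact: ceil_ge.
  have ct : ceil_eps eps x <= ts i.+1.
    by rewrite /ceil_eps tsz mulrC ler_pM2r // ler_int ceil_le_int ler_pdivrMr // -tsz.
  case: (lerP (ceil_eps eps x) (e i.+1)) => c1.
    apply: le_trans xc (le_trans c1 _); apply: smax1; first exact: (p1 _ hi1).1.
    by rewrite hb lerDl mulr_ge0 // ltW.
  case: (ltrP (ceil_eps eps x) (l i.+1)) => c2.
    apply: le_trans xc _; apply: smax1 => //; apply: p2 => //.
    by rewrite c1 c2.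
  apply: le_trans xc (le_trans (le_trans ct tl) _).
  exact: smax1 _ (p1 _ hi1).2 (le_trans c2 ct).
have Fs : feasible_restricted n V tau q Q s.
  split; first by move=> i hi; exact: (sP i hi).1.
  split; first exact: pr.
  apply: le_trans sum; apply: ler_sum_nat => i /andP[i1 i2]; apply: qb.
  by rewrite i1 -ltnS.
have gV : forall t, feasible_restricted n V tau q Q t ->
    exists k : nat, t n = e n + k%:R * eps.
  by move=> t [hv _]; have [_ [k [hk _]]] := PE _ _ (hv n hn); exists k.
have [vV optV] := @opt_exists R n e eps tau _ he monon gV (ex_intro _ s Fs).
exists vV, vD; split => //; split.
  by split; [exists ts | exact: optD].
apply: le_trans (optV.2 s Fs) _; rewrite hvD; apply: monon; exact: (sP n hn).2.1.
Qed.
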